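(* Let $A$ be a first countable locally convex topological vector space over $\mathbb C$ and give $A^\vee$ the topology of uniform convergence on compact sets. Then on $\mathrm{Max}\,A$ the lower Vietoris topology is finer than the topology generated by the sets $\{V\in\mathrm{Max}\,A: F(V)\cap K'=\emptyset\}$ with $K'\subset A^\vee$ compact.
   Context: $\mathrm{Max}\,A$ is the set of closed subspaces of $A$; its lower Vietoris topology is generated by $\{V:V\cap U\ne\emptyset\}$, $U\subset A$ open. $A^\vee$ is the continuous dual with subbasis $\{\phi:\phi(K)\subset U\}$, $K\subset A$ compact, $U\subset\mathbb C$ open; $F(V)=\{\phi\in A^\vee:\phi|_V=0\}$. *)

(* Defs.v *)
From HB Require Import structures.
From mathcomp Require Import all_boot all_order all_algebra.
From mathcomp Require Import all_classical all_reals all_analysis.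
From mathcomp Require Import complex.
Set Implicit Arguments. Unset Strict Implicit. Unset Printing Implicit Defensive.
Import Order.TTheory GRing.Theory Num.Theory.
Import numFieldTopology.Exports.
Local Open Scope classical_set_scope.
Local Open Scope ring_scope.

(** The complex numbers: [R[i]] for a real type [R], with its norm topology
    (the [^o] alias carries the topology of the numFieldType). *)
Notation Cplx R := (R[i])^o.

Definition first_countable (T : topologicalType) : Prop :=
  forall x : T, exists2 B : set_system T, countable B &
    (forall b, B b -> nbhs x b) /\
    (forall U, nbhs x U -> exists2 b, B b & b `<=` U).

(** Topology on a subset [X] of [T] generated by the subbasis [S]:
    [W] is open iff [W] is contained in [X] and every point of [W] lies in
    a finite intersection of members of [S] (traced on [X]) contained in [W]
    (the empty intersection being [X] itself). *)
Definition gen_open {T : Type} (X : set T) (S : set_system T) (W : set T) :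
    Prop :=
  W `<=` X /\
  forall x, W x -> exists F : set_system T,
    [/\ finite_set F, F `<=` S, (forall b, F b -> b x) &
        X `&` (\bigcap_(b in F) b) `<=` W].

Definition finer_on {T : Type} (X : set T) (S1 S2 : set_system T) : Prop :=
  forall W, gen_open X S2 W -> gen_open X S1 W.

Section MaxDual.
Context {R : realType} (A : tvsType R[i]).

Definition lin_subspace (V : set A) : Prop :=
  V 0 /\ forall (a : R[i]) (x y : A), V x -> V y -> V (a *: x + y).

Definition MaxA : set (set A) := [set V | closed V /\ lin_subspace V].

Definition lower_vietoris_subbasis : set_system (set A) :=
  [set S | exists U : set A, open U /\
      S = [set V | MaxA V /\ V `&` U !=set0]].

Definition CO := {compact-open, A -> Cplx R}.

(** The continuous dual A^v, as a subset of CO (its topology is the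
    subspace topology, i.e. the topology of the given subbasis). *)
Definition dual : set CO :=
  [set phi : CO | (forall (a : R[i]) (x y : A),
                     phi (a *: x + y) = a * phi x + phi y)
                  /\ continuous (phi : A -> Cplx R)].

Definition Fann (V : set A) : set CO :=
  [set phi | dual phi /\ forall v, V v -> phi v = 0].

Definition dual_compact_subbasis : set_system (set A) :=
  [set S | exists K' : set CO,
      [/\ K' `<=` dual, @compact (subspace dual) K' &
          S = [set V | MaxA V /\ Fann V `&` K' = set0]]].

End MaxDual.

(* Main.v *)
Require Import Defs.
From HB Require Import structures.
From mathcomp Require Import all_boot all_order all_algebra.
From mathcomp Require Import all_classical all_reals all_analysis.
From mathcomp Require Import complex.
Import numFieldTopology.Exports.
Import Order.TTheory GRing.Theory Num.Theory.
Local Open Scope classical_set_scope.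
Local Open Scope ring_scope.

Lemma fc_seq (T : topologicalType) (v : T) :
  (exists2 B : set_system T, countable B &
    (forall b, B b -> nbhs v b) /\
    (forall W, nbhs v W -> exists2 b, B b & b `<=` W)) ->
  exists U : nat -> set T, [/\ forall n, nbhs v (U n),
     forall n m, (n <= m)%N -> U m `<=` U n &
     forall W, nbhs v W -> exists n, U n `<=` W].
Proof.
case=> B /countable_injP [f finj] [Bn Bb].
pose e n := \bigcap_(b in [set b | B b /\ f b = n]) b.
have en n : nbhs v (e n).
  have [[b [Bb' fb]]|nb] := pselect (exists b, B b /\ f b = n).
    apply: filterS (Bn _ Bb') => x bx c [Bc fc].
    have -> : c = b by apply: finj; rewrite ?inE //; congruence.
    exact: bx.
  rewrite (_ : e n = setT); first exact: filterT.
  by apply/seteqP; split => // x _ c [Bc fc]; exfalso; apply: nb; exists c.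
pose U := fix U n := if n is k.+1 then U k `&` e k.+1 else e 0.
have Un n : nbhs v (U n) by elim: n => [|n IH] /=; [exact: en | exact: filterI].
have Ue n : U n `<=` e n by case: n => [|n] //= x [].
have Ud n m : (n <= m)%N -> U m `<=` U n.
  elim: m => [|m IH]; first by rewrite leqn0 => /eqP ->.
  rewrite leq_eqVlt => /predU1P [-> // | ].
  by rewrite ltnS => /IH h x [/h].
exists U; split => // W /Bb [b Bb' bW]; exists (f b).
apply: subset_trans (Ue _) _; apply: subset_trans _ bW => x ex.
exact: ex b (conj Bb' erefl).
Qed.

Lemma compact_seq (T : topologicalType) (w : nat -> T) (v : T) :
  w @ \oo --> v -> compact ([set v] `|` range w).
Proof.
move=> wv F PF FS.
have [cv|ncv] := pselect (cluster F v).
  by exists v; split => //; left.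
have [A [B [FA nB AB]]] : exists A B, [/\ F A, nbhs v B & A `&` B = set0].
  apply: contra_notP ncv => H A B FA nB; apply/set0P/negP => /eqP AB.
  by apply: H; exists A, B.
have [m _ Hm] := wv B nB.
pose T0 := w @` [set k | (k < m)%N].
have fT0 : finite_set T0 by apply: finite_image; exact: finite_II.
have FT0 : F T0.
  apply: filterS (filterI FS FA) => x [[->|[k _ <-]] Ax].
    exfalso; have : (A `&` B) v by split => //; exact: nbhs_singleton.
    by rewrite AB.
  have [km|mk] := ltnP k m; first by exists k.
  exfalso; have : (A `&` B) (w k) by split => //; exact: Hm.
  by rewrite AB.
have [x [T0x clx]] := finite_compact fT0 PF FT0.
exists x; split => //; case: T0x => k _ <-; right; by exists k.
Qed.

Lemma equi {K : numFieldType} {Y : pseudoMetricNormedZmodType K}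
  {T : topologicalType} (C : set {compact-open, T -> Y}) (v : T) :
  compact C -> (forall f, C f -> continuous (f : T -> Y)) ->
  (exists U : nat -> set T, [/\ forall n, nbhs v (U n),
     forall n m, (n <= m)%N -> U m `<=` U n &
     forall W, nbhs v W -> exists n, U n `<=` W]) ->
  forall e : K, 0 < e -> exists2 W, nbhs v W &
    forall (f : {compact-open, T -> Y}) u, C f -> W u -> ball (f v) e (f u).
Proof.
move=> cC cont [U [Un Ud Ub]] e e0.
apply: contrapT => H.
have H' : forall n, exists p : {compact-open, T -> Y} * T,
    [/\ C p.1, U n p.2 & ~ ball (p.1 v) e (p.1 p.2)].
  move=> n; apply: contrapT => Hn; apply: H; exists (U n) => // f u Cf Uu.
  by apply: contrapT => nb; apply: Hn; exists (f, u).
have [g Hg] := choice H'.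
pose psi := fun n => (g n).1; pose u := fun n => (g n).2.
have uv : u @ \oo --> v.
  move=> W /Ub [k kW]; exists k => // n /= kn; apply: kW; apply: (Ud _ _ kn).
  by case: (Hg n).
have [chi [Cchi clchi]] := cC (psi @ \oo) (fmap_proper_filter _ _)
   (ex_intro2 _ _ 0%N I (fun n _ => let: And3 h _ _ := Hg n in h)).
have e20 : 0 < e / 2 by rewrite divr_gt0.
have [m _ Hm] := uv _ (cont _ Cchi v _ (nbhsx_ballx (chi v) (e/2) e20)).
pose S := [set v] `|` range (fun k => u (k + m)%N).
have cS : compact S.
  apply: compact_seq => W /uv [k _ Hk]; exists k => // n /= kn.
  by apply: Hk; apply: leq_trans kn (leq_addr _ _).
pose N := [set g : {compact-open, T -> Y} | g @` S `<=` ball (chi v) (e/2)].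
have oN : open N by apply: compact_open_open => //; exact: ball_open.
have Nchi : N chi.
  move=> y [x [->|[k _ <-]] <-]; first exact: ballxx.
  by apply: Hm; rewrite /= leq_addl.
have [_ [[k mk <-] Nk]] := clchi (psi @` [set k | (m <= k)%N]) N
  (ex_intro2 _ _ m I (fun n mn => ex_intro2 _ _ n mn erefl))
  (open_nbhs_nbhs (conj oN Nchi)).
have b1 : ball (chi v) (e/2) (psi k v) by apply: Nk; exists v => //; left.
have b2 : ball (chi v) (e/2) (psi k (u k)).
  apply: Nk; exists (u k) => //; right; exists (k - m)%N => //.
  by rewrite subnK.
have := ball_triangle (ball_sym b1) b2; rewrite -splitr.
by case: (Hg k).
Qed.

From mathcomp Require Import finmap.

Lemma keyL (R : realType) (A : tvsType R[i]) : first_countable A ->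
  forall S V0, dual_compact_subbasis S -> S V0 ->
  exists G : set_system (set A), [/\ finite_set G,
    G `<=` @lower_vietoris_subbasis R A, (forall b, G b -> b V0) &
    @MaxA R A `&` \bigcap_(b in G) b `<=` S].
Proof.
move=> fcA S V0 [K' [K'd cK' ->]] [MV0 FV0].
have cK : compact (K' : set (CO A)).
  by move: cK'; rewrite -(setIidl K'd) => /compact_subspaceIP.
have per : forall phi : CO A, exists p : set (CO A) * set A, K' phi ->
   [/\ open p.1, p.1 phi, open p.2, V0 `&` p.2 !=set0 &
       forall psi u, K' psi -> p.1 psi -> p.2 u -> psi u <> 0].
  move=> phi; have [Kphi|nK] := pselect (K' phi); last first.
    by exists (set0, set0).
  have [v V0v phiv] : exists2 v, V0 v & phi v <> 0.
    apply: contrapT => H; have : (Fann V0 `&` K') phi.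
      split => //; split; first exact: K'd.
      by move=> v V0v; apply: contrapT => nz; apply: H; exists v.
    by rewrite FV0.
  pose e : R[i] := `|phi v| / 2.
  have e0 : 0 < e by rewrite divr_gt0 // normr_gt0; apply/eqP.
  have [W nW HW] := equi K' v cK (fun f Kf => (K'd _ Kf).2) (@fc_seq _ v (fcA v)) e e0.
  move: nW; rewrite nbhsE => -[W' [oW' W'v] W'W].
  exists ([set g : CO A | g @` [set v] `<=` ball (phi v) e], W') => _; split.
  - apply: compact_open_open; [exact: compact_set1 | exact: ball_open].
  - by move=> _ [x -> <-]; exact: ballxx.
  - exact: oW'.
  - by exists v.
  move=> psi u Kpsi Npsi W'u psiu0.
  have b1 : ball (phi v) e (psi v) by apply: Npsi; exists v.
  have b2 := HW psi u Kpsi (W'W _ W'u); rewrite psiu0 in b2.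
  have := ball_triangle b1 b2; rewrite /e -splitr.
  by rewrite -ball_normE /ball_ /= subr0 ltxx.
have [pf Hpf] := choice per.
move: cK; rewrite compact_cover => cK.
have [D' D'K cov] := cK _ K' (fun phi => (pf phi).1)
  (fun phi Kphi => let: And5 h _ _ _ _ := Hpf phi Kphi in h)
  (fun phi Kphi => @ex_intro2 _ K' (fun i => (pf i).1 phi) phi Kphi
     (let: And5 _ h _ _ _ := Hpf phi Kphi in h)).
have D'K' (phi : CO A) : [set` D'] phi -> K' phi.
  by move=> /D'K; rewrite in_setE.
exists [set [set V | MaxA V /\ V `&` (pf phi).2 !=set0] | phi in [set` D']].
split.
- by apply: finite_image; exact: finite_fset.
- move=> _ [phi /D'K'/Hpf [_ _ o2 _ _] <-]; exists (pf phi).2; split => //.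
- by move=> _ [phi /D'K'/Hpf [_ _ _ ne _] <-]; split.
move=> V [MV HG]; split => //; apply/seteqP; split => // psi [[dpsi Fpsi] Kpsi].
have [phi D'phi Nphi] := cov psi Kpsi.
have [_ [u [Vu Uu]]] := HG _ (ex_intro2 _ _ phi D'phi erefl).
have [_ _ _ _ H] := Hpf phi (D'K' _ D'phi).
exact: H psi u Kpsi Nphi Uu (Fpsi u Vu).
Qed.

Theorem lemma7p10 (R : realType) (A : tvsType R[i]) :
  first_countable A ->
  finer_on (@MaxA R A) (@lower_vietoris_subbasis R A)
    (@dual_compact_subbasis R A).
Proof.
move=> fcA W [WM HW]; split => // V0 WV0.
have [F [fF FS FV0 FW]] := HW V0 WV0.
have perS : forall S, exists G : set_system (set A), F S ->
  [/\ finite_set G,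
    G `<=` @lower_vietoris_subbasis R A, (forall b, G b -> b V0) &
    @MaxA R A `&` \bigcap_(b in G) b `<=` S].
  move=> S; have [FS'|nFS] := pselect (F S); last by exists set0.
  have [G HG] := @keyL R A fcA S V0 (FS _ FS') (FV0 _ FS'); by exists G.
have [g Hg] := choice perS.
exists (\bigcup_(S in F) g S); split.
- apply: (bigcup_finite fF) => S FS'; by case: (Hg S FS').
- by move=> b [S FS' gb]; case: (Hg S FS') => _ + _ _; apply.
- by move=> b [S FS' gb]; case: (Hg S FS') => _ _ + _; apply.
move=> V [MV HV]; apply: FW; split => // S FS'.
case: (Hg S FS') => _ _ _; apply; split => // b gb; apply: HV; by exists S.
Qed.
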